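(* The axiom system $EL_{int}$ is complete with respect to the class of all topo-models: for every formula $\varphi\in\mathcal{L}_{EL_{int}}$, if $\varphi$ is valid in every topo-model, then $\varphi$ is a theorem of $EL_{int}$.
   Context: Fix a countable set $\mathit{Prop}$ of propositional variables and a finite non-empty set $\mathcal{A}$ of agents. The language $\mathcal{L}_{EL_{int}}$ is given by $\varphi ::= p \mid \neg\varphi \mid \varphi\wedge\varphi \mid K_i\varphi \mid \mathrm{int}(\varphi)$ with $p\in\mathit{Prop}$, $i\in\mathcal{A}$; $\vee,\rightarrow,\leftrightarrow$ are the usual abbreviations, $\bot := p\wedge\neg p$, $\hat K_i\varphi:=\neg K_i\neg\varphi$. Topo-models: Let $(X,\tau)$ be a topological space and write $\mathrm{Int}(A)$ for the topological interior of $A\subseteq X$. A neighbourhood function set $\Phi$ on $(X,\tau)$ is a set of partial functions $\theta$ from $X$ to the set of functions $\mathcal{A}\to\tau$ such that for all $x,y\in Dom(\theta)$, all $i\in\mathcal{A}$ and all $U\in\tau$: (1) $\theta(x)(i)\in\tau$; (2) $x\in\theta(x)(i)$; (3) $\theta(x)(i)\subseteq Dom(\theta)$; (4) if $y\in\theta(x)(i)$ then $\theta(x)(i)=\theta(y)(i)$; (5) $\theta|_U\in\Phi$, where $\theta|_U$ is the partial function with $Dom(\theta|_U)=Dom(\theta)\cap U$ and $\theta|_U(x)(i)=\theta(x)(i)\cap U$. A topo-model is $\mathcal{M}=(X,\tau,\Phi,V)$ with $(X,\tau)$ a topological space, $\Phi$ a neighbourhood function set on it, and $V$ assigning to each $p\in\mathit{Prop}$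 a subset of $X$. A neighbourhood situation is a pair $(x,\theta)$ with $\theta\in\Phi$, $x\in Dom(\theta)$. Semantics: $(x,\theta)\models p$ iff $x\in V(p)$; Boolean clauses as usual; $(x,\theta)\models K_i\varphi$ iff $(y,\theta)\models\varphi$ for all $y\in\theta(x)(i)$; $(x,\theta)\models\mathrm{int}(\varphi)$ iff $x\in\mathrm{Int}([\![\varphi]\!]^\theta)$, where $[\![\varphi]\!]^\theta=\{y\in Dom(\theta)\mid (y,\theta)\models\varphi\}$. $\varphi$ is valid in $\mathcal{M}$ if it is true at every neighbourhood situation of $\mathcal{M}$. The axiom system $EL_{int}$ has axioms: all instances of propositional tautologies; $K_i(\varphi\to\psi)\to(K_i\varphi\to K_i\psi)$; $K_i\varphi\to\varphi$; $K_i\varphi\to K_iK_i\varphi$; $\neg K_i\varphi\to K_i\neg K_i\varphi$; $\mathrm{int}(\varphi\to\psi)\to(\mathrm{int}(\varphi)\to\mathrm{int}(\psi))$; $\mathrm{int}(\varphi)\to\varphi$; $\mathrm{int}(\varphi)\to\mathrm{int}(\mathrm{int}(\varphi))$; $K_i\varphi\to\mathrm{int}(\varphi)$; and rules: modus ponens, from $\varphi$ infer $K_i\varphi$, from $\varphi$ infer $\mathrm{int}(\varphi)$. Theorems are the members of the smallest set containing the axioms and closed under the rules. *)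

(* Defs.v *)
From Stdlib Require Import List Bool.
Set Implicit Arguments.

Inductive form (Ag : Type) : Type :=
| Var : nat -> form Ag
| Neg : form Ag -> form Ag
| Conj : form Ag -> form Ag -> form Ag
| K : Ag -> form Ag -> form Ag
| Int : form Ag -> form Ag.

Arguments Var {Ag} _.

Definition Imp {Ag} (a b : form Ag) : form Ag := Neg (Conj a (Neg b)).

(* A formula is an instance of a propositional tautology iff it is true under
   every Boolean valuation of its maximal non-Boolean subformulas
   (variables, K_i psi, int psi). *)
Fixpoint beval {Ag} (v : form Ag -> bool) (f : form Ag) : bool :=
  match f with
  | Neg a => negb (beval v a)
  | Conj a b => beval v a && beval v b
  | _ => v f
  end.

Definition taut {Ag} (f : form Ag) : Prop := forall v, beval v f = true.

Inductive thm {Ag : Type} : form Ag -> Prop :=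
| ax_taut f : taut f -> thm f
| ax_K i a b : thm (Imp (K i (Imp a b)) (Imp (K i a) (K i b)))
| ax_T i a : thm (Imp (K i a) a)
| ax_4 i a : thm (Imp (K i a) (K i (K i a)))
| ax_5 i a : thm (Imp (Neg (K i a)) (K i (Neg (K i a))))
| ax_intK a b : thm (Imp (Int (Imp a b)) (Imp (Int a) (Int b)))
| ax_intT a : thm (Imp (Int a) a)
| ax_int4 a : thm (Imp (Int a) (Int (Int a)))
| ax_Kint i a : thm (Imp (K i a) (Int a))
| r_mp a b : thm (Imp a b) -> thm a -> thm b
| r_necK i a : thm a -> thm (K i a)
| r_necInt a : thm a -> thm (Int a).

Record topology (X : Type) := {
  opn : (X -> Prop) -> Prop;
  opn_ext : forall U V, opn U -> (forall x, U x <-> V x) -> opn V;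
  opn_full : opn (fun _ => True);
  opn_union : forall F : (X -> Prop) -> Prop,
      (forall U, F U -> opn U) -> opn (fun x => exists U, F U /\ U x);
  opn_inter : forall U V, opn U -> opn V -> opn (fun x => U x /\ V x)
}.

Definition interior {X} (t : topology X) (S : X -> Prop) (x : X) : Prop :=
  exists U, opn t U /\ U x /\ (forall y, U y -> S y).

(* A partial function theta from X to (Ag -> subsets of X), given by its
   domain and its values (values outside the domain are irrelevant). *)
Record pfun (Ag X : Type) := {
  dom : X -> Prop;
  nb : X -> Ag -> X -> Prop
}.

Definition pfeq {Ag X} (t1 t2 : pfun Ag X) : Prop :=
  (forall x, dom t1 x <-> dom t2 x) /\
  (forall x, dom t1 x -> forall i y, nb t1 x i y <-> nb t2 x i y).

Definition restrict {Ag X} (t : pfun Ag X) (U : X -> Prop) : pfun Ag X :=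
  {| dom := fun x => dom t x /\ U x;
     nb := fun x i y => nb t x i y /\ U y |}.

Definition nfs {Ag X} (tp : topology X) (Phi : pfun Ag X -> Prop) : Prop :=
  forall th, Phi th ->
    (forall x i, dom th x ->
       opn tp (nb th x i) /\
       nb th x i x /\
       (forall y, nb th x i y -> dom th y) /\
       (forall y, dom th y -> nb th x i y ->
          forall z, nb th x i z <-> nb th y i z))
    /\ (forall U, opn tp U ->
          exists th', Phi th' /\ pfeq th' (restrict th U)).

Record topo_model (Ag : Type) := {
  carrier : Type;
  top : topology carrier;
  Phi : pfun Ag carrier -> Prop;
  Phi_nfs : nfs top Phi;
  val : nat -> carrier -> Prop
}.

Fixpoint sat {Ag} (M : topo_model Ag) (th : pfun Ag (carrier M))
    (f : form Ag) : carrier M -> Prop :=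
  match f with
  | Var p => fun x => val M p x
  | Neg a => fun x => ~ sat M th a x
  | Conj a b => fun x => sat M th a x /\ sat M th b x
  | K i a => fun x => forall y, nb th x i y -> sat M th a y
  | Int a => interior (top M) (fun y => dom th y /\ sat M th a y)
  end.

Definition valid {Ag} (M : topo_model Ag) (f : form Ag) : Prop :=
  forall th x, Phi M th -> dom th x -> sat M th f x.

(* Main.v *)
Require Import Defs.
From Stdlib Require Import List Bool Classical ClassicalEpsilon Cantor Lia.
Import ListNotations.

Definition imps {Ag} (l : list (form Ag)) (f : form Ag) := fold_right Imp f l.
Definition bot {Ag} : form Ag := Conj (Var 0) (Neg (Var 0)).

Lemma beval_imps {Ag} v (l : list (form Ag)) f :
  beval v (imps l f) = implb (forallb (beval v) l) (beval v f).
Proof.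
  induction l as [|g l IH]. simpl. now destruct (beval v f).
  change (imps (g :: l) f) with (Imp g (imps l f)). unfold Imp. cbn [beval forallb].
  fold (Imp g (imps l f)). rewrite IH.
  destruct (beval v g), (forallb (beval v) l), (beval v f); reflexivity.
Qed.

Lemma beval_imp {Ag} v (a b : form Ag) : beval v (Imp a b) = implb (beval v a) (beval v b).
Proof. simpl. destruct (beval v a), (beval v b); reflexivity. Qed.

Lemma taut1 {Ag} (a b : form Ag) :
  (forall v, beval v a = true -> beval v b = true) -> thm a -> thm b.
Proof.
  intros H Ha. apply (@r_mp _ a b); auto. apply ax_taut. intro v.
  rewrite beval_imp. specialize (H v). destruct (beval v a); simpl; auto.
Qed.

Lemma taut2 {Ag} (a b c : form Ag) :
  (forall v, beval v a = true -> beval v b = true -> beval v c = true) ->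
  thm a -> thm b -> thm c.
Proof.
  intros H Ha Hb. apply (@r_mp _ b); auto. apply (@r_mp _ a); auto.
  apply ax_taut. intro v. rewrite !beval_imp. specialize (H v).
  destruct (beval v a), (beval v b); simpl; auto.
Qed.

Definition der {Ag} (G : form Ag -> Prop) (f : form Ag) :=
  exists l, (forall g, In g l -> G g) /\ thm (imps l f).

Lemma der_taut2 {Ag} G (a b c : form Ag) :
  (forall v, beval v a = true -> beval v b = true -> beval v c = true) ->
  der G a -> der G b -> der G c.
Proof.
  intros H [l1 [H1 T1]] [l2 [H2 T2]]. exists (l1 ++ l2). split.
  - intros g Hg. apply in_app_or in Hg. destruct Hg; auto.
  - refine (taut2 _ _ _ _ T1 T2).
    intros v. rewrite !beval_imps, forallb_app. specialize (H v).
    destruct (forallb (beval v) l1), (forallb (beval v) l2), (beval v a), (beval v b);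
      simpl; auto.
Qed.

Lemma der_taut1 {Ag} G (a c : form Ag) :
  (forall v, beval v a = true -> beval v c = true) -> der G a -> der G c.
Proof. intros H Ha. apply (der_taut2 G a a c); auto. Qed.

Lemma der_in {Ag} (G : form Ag -> Prop) f : G f -> der G f.
Proof.
  intro H. exists [f]. split. intros g [->|[]]; auto.
  apply ax_taut. intro v. unfold imps; simpl. destruct (beval v f); reflexivity.
Qed.

Lemma der_thm {Ag} (G : form Ag -> Prop) f : thm f -> der G f.
Proof. intro H. exists []. split; [intros g []|exact H]. Qed.

Lemma ded {Ag} (G : form Ag -> Prop) a f :
  der (fun g => G g \/ g = a) f -> der G (Imp a f).
Proof.
  intros [l [Hl T]]. revert f T. induction l as [|g l IH]; intros f T.
  - exists []. split; [intros g []|]. apply (taut1 f); auto.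
    intros v H. change (imps [] (Imp a f)) with (Imp a f). rewrite beval_imp, H.
    destruct (beval v a); auto.
  - assert (T' : thm (imps l (Imp g f))).
    { refine (taut1 _ _ _ T). intro v. rewrite !beval_imps, beval_imp. cbn [forallb].
      destruct (beval v g), (forallb (beval v) l), (beval v f); auto. }
    destruct (IH (fun h Hh => Hl h (or_intror Hh)) _ T') as [l' [Hl' T'']].
    destruct (Hl g (or_introl eq_refl)) as [Gg| ->].
    + exists (g :: l'). split. intros h [<-|Hh]; auto.
      refine (taut1 _ _ _ T''). intro v. rewrite !beval_imps, !beval_imp. cbn [forallb].
      destruct (beval v g), (forallb (beval v) l'), (beval v f), (beval v a); auto.
    + exists l'. split; auto.
      refine (taut1 _ _ _ T''). intro v. rewrite !beval_imps, !beval_imp.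
      destruct (forallb (beval v) l'), (beval v f), (beval v a); auto.
Qed.

Definition consistent {Ag} (G : form Ag -> Prop) := ~ der G bot.
Definition MCS {Ag} (G : form Ag -> Prop) := consistent G /\ forall f, G f \/ G (Neg f).

Lemma mcs_closed {Ag} (G : form Ag -> Prop) f : MCS G -> der G f -> G f.
Proof.
  intros [C M] D. destruct (M f) as [|N]; auto. exfalso. apply C.
  apply (der_taut2 G f (Neg f)); auto using der_in.
  intros v; simpl; destruct (beval v f); simpl; congruence.
Qed.

Lemma mcs_thm {Ag} (G : form Ag -> Prop) f : MCS G -> thm f -> G f.
Proof. intros M T. apply mcs_closed; auto using der_thm. Qed.

Lemma mcs_neg {Ag} (G : form Ag -> Prop) f : MCS G -> (G (Neg f) <-> ~ G f).
Proof.
  intros M. split.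
  - intros N P. apply (proj1 M). apply (der_taut2 G f (Neg f)); auto using der_in.
    intros v; simpl; destruct (beval v f); simpl; congruence.
  - intros N. destruct (proj2 M f); tauto.
Qed.

Lemma mcs_conj {Ag} (G : form Ag -> Prop) a b : MCS G -> (G (Conj a b) <-> G a /\ G b).
Proof.
  intros M. split.
  - intros H. split; apply (mcs_closed _ _ M); apply (der_taut1 G (Conj a b)); auto using der_in;
    intros v; simpl; destruct (beval v a), (beval v b); simpl; congruence.
  - intros [Ha Hb]. apply (mcs_closed _ _ M). apply (der_taut2 G a b); auto using der_in.
    intros v; simpl; intros -> ->; reflexivity.
Qed.

Lemma mcs_mp {Ag} (G : form Ag -> Prop) a b : MCS G -> G (Imp a b) -> G a -> G b.
Proof.
  intros M H1 H2. apply (mcs_closed _ _ M). apply (der_taut2 G (Imp a b) a); auto using der_in.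
  intros v. rewrite beval_imp. intros H H0. rewrite H0 in H. exact H.
Qed.

Fixpoint Flist {Ag} (ags : list Ag) (n : nat) : list (form Ag) :=
  match n with
  | 0 => []
  | S n => Flist ags n ++ (Var n :: map (@Neg Ag) (Flist ags n) ++
      flat_map (fun a => map (Conj a) (Flist ags n)) (Flist ags n) ++
      flat_map (fun i => map (K i) (Flist ags n)) ags ++ map (@Int Ag) (Flist ags n))
  end.

Lemma Flist_mono {Ag} (ags : list Ag) n m f : n <= m -> In f (Flist ags n) -> In f (Flist ags m).
Proof.
  induction 1; auto. intro H0. simpl. apply in_or_app. left; auto.
Qed.

Lemma Flist_all {Ag} (ags : list Ag) : (forall i, In i ags) -> forall f, exists n, In f (Flist ags n).
Proof.
  intros Hags f. induction f as [p|a [n Hn]|a [n Hn] b [m Hm]|i a [n Hn]|a [n Hn]].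
  - exists (S p). simpl. apply in_or_app. right. left. reflexivity.
  - exists (S n). simpl. apply in_or_app. right. right. apply in_or_app. left.
    apply in_map. exact Hn.
  - exists (S (max n m)). simpl. apply in_or_app. right. right. apply in_or_app. right.
    apply in_or_app. left. apply in_flat_map. exists a. split.
    + apply (Flist_mono ags n); auto; lia.
    + apply in_map. apply (Flist_mono ags m); auto; lia.
  - exists (S n). simpl. apply in_or_app. right. right. apply in_or_app. right.
    apply in_or_app. right. apply in_or_app. left. apply in_flat_map. exists i. split; auto.
    apply in_map; auto.
  - exists (S n). simpl. apply in_or_app. right. right. apply in_or_app. right.
    apply in_or_app. right. apply in_or_app. right. apply in_map; auto.
Qed.

Lemma enum_exists {Ag} : (exists l : list Ag, forall i, In i l) ->
  exists e : nat -> form Ag, forall f, exists k, e k = f.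
Proof.
  intros [ags Hags].
  exists (fun k => let (n, j) := of_nat k in nth j (Flist ags n) (Var 0)).
  intros f. destruct (Flist_all ags Hags f) as [n Hn].
  destruct (In_nth _ _ (Var 0) Hn) as [j [_ Hj]].
  exists (to_nat (n, j)). rewrite cancel_of_to. exact Hj.
Qed.


Fixpoint chain {Ag} (e : nat -> form Ag) (G : form Ag -> Prop) (n : nat) : form Ag -> Prop :=
  match n with
  | 0 => G
  | S n =>
    if excluded_middle_informative (consistent (fun g => chain e G n g \/ g = e n))
    then (fun g => chain e G n g \/ g = e n)
    else (fun g => chain e G n g \/ g = Neg (e n))
  end.

Lemma chain_S {Ag} e G n (g : form Ag) : chain e G n g -> chain e G (S n) g.
Proof. intro H. simpl. destruct excluded_middle_informative; auto. Qed.

Lemma chain_mono {Ag} e G n m (g : form Ag) : n <= m -> chain e G n g -> chain e G m g.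
Proof. induction 1; auto using chain_S. Qed.

Lemma der_mono {Ag} (G H : form Ag -> Prop) f : (forall g, G g -> H g) -> der G f -> der H f.
Proof. intros S [l [Hl T]]. exists l. split; auto. Qed.

Lemma chain_cons {Ag} e (G : form Ag -> Prop) n : consistent G -> consistent (chain e G n).
Proof.
  intro C. induction n; simpl; auto.
  destruct excluded_middle_informative as [C1|C1]; auto.
  intro D. apply IHn. apply NNPP in C1. apply ded in C1, D.
  refine (der_taut2 _ _ _ _ _ C1 D). intro v.
  rewrite !beval_imp. unfold bot. cbn [beval].
  destruct (beval v (e n)), (v (Var 0)); simpl; congruence.
Qed.

Lemma lindenbaum {Ag} (e : nat -> form Ag) : (forall f, exists k, e k = f) ->
  forall G, consistent G -> exists D : form Ag -> Prop, MCS D /\ forall g, G g -> D g.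
Proof.
  intros He G C. exists (fun g => exists n, chain e G n g). split; [split|].
  - intros [l [Hl T]].
    assert (HN : exists N, forall g, In g l -> chain e G N g).
    { clear T. induction l as [|g l IH].
      - exists 0. intros g [].
      - destruct IH as [N HN]. intros h Hh; apply Hl; right; auto.
        destruct (Hl g (or_introl eq_refl)) as [n Hn].
        exists (max N n). intros h [<-|Hh].
        + apply (chain_mono e G n); auto; lia.
        + apply (chain_mono e G N); auto; lia. }
    destruct HN as [N HN]. apply (chain_cons e G N C). exists l. auto.
  - intros f. destruct (He f) as [k <-].
    assert (H : chain e G (S k) (e k) \/ chain e G (S k) (Neg (e k))).
    { simpl. destruct excluded_middle_informative; auto. }
    destruct H; [left|right]; exists (S k); auto.
  - intros g Hg. exists 0. exact Hg.
Qed.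

Lemma box_imps {Ag} (B : form Ag -> form Ag) (nec : forall a, thm a -> thm (B a))
  (kax : forall a b, thm (Imp (B (Imp a b)) (Imp (B a) (B b)))) :
  forall l b, thm (imps l b) -> thm (imps (map B l) (B b)).
Proof.
  induction l as [|g l IH]; intros b T.
  - apply nec. exact T.
  - assert (T' : thm (imps l (Imp g b))).
    { refine (taut1 _ _ _ T). intro v. rewrite !beval_imps, beval_imp. cbn [forallb].
      destruct (beval v g), (forallb (beval v) l), (beval v b); auto. }
    apply IH in T'. refine (taut2 _ _ _ _ T' (kax g b)). intro v.
    rewrite !beval_imps, !beval_imp. cbn [forallb map].
    destruct (forallb (beval v) (map B l)), (beval v (B (Imp g b))), (beval v (B g)),
      (beval v (B b)); auto.
Qed.

Lemma existence {Ag} (e : nat -> form Ag) (He : forall f, exists k, e k = f)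
  (B : form Ag -> form Ag) (nec : forall a, thm a -> thm (B a))
  (kax : forall a b, thm (Imp (B (Imp a b)) (Imp (B a) (B b))))
  (x : form Ag -> Prop) a : MCS x -> ~ x (B a) ->
  exists y : form Ag -> Prop, MCS y /\ (forall c, x (B c) -> y c) /\ ~ y a.
Proof.
  intros Mx Na.
  assert (C : consistent (fun g => x (B g) \/ g = Neg a)).
  { intro D. apply ded in D. destruct D as [l [Hl T]].
    assert (T' : thm (imps l a)).
    { refine (taut1 _ _ _ T). intro v. rewrite !beval_imps, !beval_imp. unfold bot.
      cbn [beval]. destruct (forallb (beval v) l), (beval v a), (v (Var 0)); auto. }
    apply (box_imps B nec kax) in T'. apply Na. apply (mcs_closed _ _ Mx).
    exists (map B l). split; auto. intros g Hg. apply in_map_iff in Hg.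
    destruct Hg as [h [<- Hh]]. auto. }
  destruct (lindenbaum e He _ C) as [y [My Hy]]. exists y. split; [auto|split].
  - intros c Hc. apply Hy. auto.
  - intro Ya. apply (proj1 (mcs_neg y a My) (Hy _ (or_intror eq_refl)) Ya).
Qed.

Definition W (Ag : Type) := {G : form Ag -> Prop | MCS G}.
Definition R {Ag} (x y : W Ag) := forall a, proj1_sig x (Int a) -> proj1_sig y a.
Definition Rk {Ag} (i : Ag) (x y : W Ag) := forall a, proj1_sig x (K i a) -> proj1_sig y a.
Definition copn {Ag} (U : W Ag -> Prop) := forall x y, U x -> R x y -> U y.

Lemma R_refl {Ag} (x : W Ag) : R x x.
Proof. intros a H. destruct x as [x Mx]; simpl in *. apply (mcs_mp x (Int a)); auto.
  apply mcs_thm; auto. apply ax_intT. Qed.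

Lemma R_trans {Ag} (x y z : W Ag) : R x y -> R y z -> R x z.
Proof. intros H1 H2 a H. apply H2, H1. destruct x as [x Mx]; simpl in *.
  apply (mcs_mp x (Int a)); auto. apply mcs_thm; auto. apply ax_int4. Qed.

Lemma Rk_refl {Ag} i (x : W Ag) : Rk i x x.
Proof. intros a H. destruct x as [x Mx]; simpl in *. apply (mcs_mp x (K i a)); auto.
  apply mcs_thm; auto. apply ax_T. Qed.

Lemma Rk_trans {Ag} i (x y z : W Ag) : Rk i x y -> Rk i y z -> Rk i x z.
Proof. intros H1 H2 a H. apply H2, H1. destruct x as [x Mx]; simpl in *.
  apply (mcs_mp x (K i a)); auto. apply mcs_thm; auto. apply ax_4. Qed.

Lemma Rk_eucl {Ag} i (x y z : W Ag) : Rk i x y -> Rk i x z -> Rk i y z.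
Proof.
  intros H1 H2 a H. apply H2. destruct x as [x Mx], y as [y My]; simpl in *.
  apply NNPP. intro N. apply (mcs_neg x) in N; auto.
  assert (x (K i (Neg (K i a)))) by (apply (mcs_mp x (Neg (K i a))); auto;
    apply mcs_thm; auto; apply ax_5).
  apply H1 in H0. apply (mcs_neg y) in H0; auto.
Qed.

Lemma Rk_sym {Ag} i (x y : W Ag) : Rk i x y -> Rk i y x.
Proof. intro H. apply (Rk_eucl i x); auto using Rk_refl. Qed.

Lemma R_Rk {Ag} i (x y : W Ag) : R x y -> Rk i x y.
Proof. intros H a Ha. apply H. destruct x as [x Mx]; simpl in *.
  apply (mcs_mp x (K i a)); auto. apply mcs_thm; auto. apply ax_Kint. Qed.

Definition ctop (Ag : Type) : topology (W Ag).
Proof.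
  refine {| opn := @copn Ag |}.
  - intros U V HU HUV x y Vx Rxy. apply HUV. apply (HU x); auto. apply HUV; auto.
  - intros x y _ _; exact I.
  - intros F HF x y [U [FU Ux]] Rxy. exists U. split; auto. apply (HF U FU x); auto.
  - intros U V HU HV x y [Ux Vx] Rxy. split; [apply (HU x)|apply (HV x)]; auto.
Defined.

Definition thf (Ag : Type) : pfun Ag (W Ag) :=
  {| dom := fun _ => True; nb := fun x i y => Rk i x y |}.

Definition cPhi (Ag : Type) (th : pfun Ag (W Ag)) :=
  exists U, copn U /\ th = restrict (thf Ag) U.

Lemma cnfs (Ag : Type) : nfs (ctop Ag) (cPhi Ag).
Proof.
  intros th [U [HU ->]]. split.
  - intros x i [_ Ux]. simpl. split; [|split; [|split]].
    + intros y z [Hy Uy] Ryz. split. apply (Rk_trans i x y); auto using R_Rk.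
      apply (HU y); auto.
    + split; auto using Rk_refl.
    + intros y [_ Uy]. split; auto.
    + intros y _ [Hy Uy] z. split; intros [Hz Uz]; split; auto.
      * apply (Rk_trans i y x); auto using Rk_sym.
      * apply (Rk_trans i x y); auto.
  - intros V HV. exists (restrict (thf Ag) (fun x => U x /\ V x)). split.
    + exists (fun x => U x /\ V x). split; auto.
      intros x y [Ux Vx] Rxy. split; [apply (HU x)|apply (HV x)]; auto.
    + split; simpl; intros; tauto.
Qed.

Definition cM (Ag : Type) : topo_model Ag :=
  {| carrier := W Ag; top := ctop Ag; Phi := cPhi Ag; Phi_nfs := cnfs Ag;
     val := fun p x => proj1_sig x (Var p) |}.

Lemma truth {Ag} (e : nat -> form Ag) (He : forall f, exists k, e k = f) :
  forall f (x : W Ag), sat (cM Ag) (restrict (thf Ag) (fun _ => True)) f x <-> proj1_sig x f.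
Proof.
  induction f as [p|a IH|a IHa b IHb|i a IH|a IH]; intros x; simpl.
  - tauto.
  - rewrite IH. destruct x as [x Mx]; simpl. symmetry. apply mcs_neg; auto.
  - rewrite IHa, IHb. destruct x as [x Mx]; simpl. symmetry. apply mcs_conj; auto.
  - split.
    + intro H. apply NNPP. intro N.
      destruct (existence e He (K i) (fun a => @r_necK _ i a) (@ax_K _ i)
                  (proj1_sig x) a (proj2_sig x) N) as [y [My [Hxy Ny]]].
      apply Ny. apply (IH (exist _ y My)). apply H. split; auto.
    + intros H y [Hy _]. apply IH. apply Hy. exact H.
  - split.
    + intros [U [HU [Ux HUs]]]. apply NNPP. intro N.
      destruct (existence e He (@Int Ag) (@r_necInt _) (@ax_intK _)
                  (proj1_sig x) a (proj2_sig x) N) as [y [My [Hxy Ny]]].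
      apply Ny. apply (IH (exist _ y My)). apply (HUs (exist _ y My)).
      apply (HU x); auto.
    + intro H. exists (R x). split; [|split].
      * intros y z Ry Ryz. apply (R_trans x y z); auto.
      * apply R_refl.
      * intros y Ry. split; [split; exact I|]. apply IH. apply Ry. exact H.
Qed.

Theorem theorem2 (Ag : Type) (Ag_finite : exists l : list Ag, forall i, In i l)
    (Ag_nonempty : inhabited Ag) (phi : form Ag) :
  (forall M : topo_model Ag, valid M phi) -> thm phi.
Proof.
  intros Hv. destruct (enum_exists Ag_finite) as [e He].
  apply NNPP. intro N.
  assert (C : consistent (fun g => False \/ g = Neg phi)).
  { intro D. apply ded in D. destruct D as [[|g l] [Hl T]].
    - apply N. refine (taut1 _ _ _ T). intro v. change (imps [] ?x) with x.
      rewrite beval_imp. unfold bot. cbn [beval].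
      destruct (beval v phi), (v (Var 0)); auto.
    - exact (Hl g (or_introl eq_refl)). }
  destruct (lindenbaum e He _ C) as [D [MD HD]].
  assert (Hphi := Hv (cM Ag) (restrict (thf Ag) (fun _ => True)) (exist _ D MD)).
  assert (P : Phi (cM Ag) (restrict (thf Ag) (fun _ => True))).
  { exists (fun _ => True). split; [intros x y _ _; exact I|reflexivity]. }
  specialize (Hphi P (conj I I)).
  apply (truth e He) in Hphi. simpl in Hphi.
  apply (proj1 (mcs_neg D phi MD) (HD _ (or_intror eq_refl))). exact Hphi.
Qed.
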